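(* In the setting below, let $D$ be a down-square ($j\colon X\to Y$, $q\colon X\to Z$, $i\colon Z\to W$, $p\colon Y\to W$, $\alpha\colon pj\Rightarrow iq$) such that $i,j$ are morphisms of $\mathcal A\cap\mathcal B$, $\epsilon^{\mathcal B}_i$ and $\epsilon^{\mathcal B}_j$ are invertible, and $\alpha$ is invertible. Let $D'$ be the down-square with edges $q\colon X\to Z$ (top), $j\colon X\to Y$ (left), $p\colon Y\to W$ (bottom), $i\colon Z\to W$ (right) and $2$-cell $\alpha^{-1}\colon iq\Rightarrow pj$. Then the composite $j_!q^*\xRightarrow{A_D}p^*i_!\xRightarrow{\rho_i}p^*i_*\xRightarrow{B_{D'}}j_*q^*$ equals $j_!q^*\xRightarrow{\rho_j}j_*q^*$.
   Context: Setting. $\mathcal C,\mathcal D$ are $2$-categories; $\mathcal A,\mathcal B$ are $2$-subcategories of $\mathcal C$ (hom-inclusions fully faithful and injective on objects). Given: a pseudofunctor $\mathcal C\to\mathcal D^{\mathrm{coop}}$, $X\mapsto X$, $f\mapsto f^*$ ($f\colon X\to Y$ gives $f^*\colon Y\to X$), $(\alpha\colon f\Rightarrow g)\mapsto\alpha^*\colon g^*\Rightarrow f^*$, coherence $(gf)^*\cong f^*g^*$; pseudofunctors $\mathcal B\to\mathcal D$, $p\mapsto p_*$, and $\mathcal A\to\mathcal D$, $i\mapsto i_!$; adjunctions $p^*\dashv p_*$ (unit $\eta_p\colon1\Rightarrow p_*p^*$, counit $\epsilon_p\colon p^*p_*\Rightarrow1$) for $p\in\mathcal B$ and $i_!\dashv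 i^*$ (unit $\eta_i\colon1\Rightarrow i^*i_!$, counit $\epsilon_i\colon i_!i^*\Rightarrow1$) for $i\in\mathcal A$, compatible with the pseudofunctor structures (units/counits of composites correspond under coherence isomorphisms to composites; $2$-cells act by mates). For $f\in\mathcal A\cap\mathcal B$ write $\eta^{\mathcal B}_f,\epsilon^{\mathcal B}_f$ for the unit/counit of $f^*\dashv f_*$ and $\eta^{\mathcal A}_f,\epsilon^{\mathcal A}_f$ for those of $f_!\dashv f^*$. $\cong$ denotes coherence isomorphisms. A down-square $D$: $j\colon X\to Y$, $q\colon X\to Z$, $i\colon Z\to W$, $p\colon Y\to W$, $\alpha\colon pj\Rightarrow iq$. If $p,q\in\mathcal B$: $B_D\colon i^*p_*\Rightarrow q_*j^*$ is $i^*p_*\xRightarrow{\eta_q}q_*q^*i^*p_*\cong q_*(iq)^*p_*\xRightarrow{\alpha^*}q_*(pj)^*p_*\cong q_*j^*p^*p_*\xRightarrow{\epsilon_p}q_*j^*$. If $i,j\in\mathcal A$: $A_D\colon j_!q^*\Rightarrow p^*i_!$ is $j_!q^*\xRightarrow{\eta_i}j_!q^*i^*i_!\cong j_!(iq)^*i_!\xRightarrow{\alpha^*}j_!(pj)^*i_!\cong j_!j^*p^*i_!\xRightarrow{\epsilon_j}p^*i_!$. For $f\in\mathcal A\cap\mathcal B$ with $\epsilon^{\mathcal B}_f$ invertible (equivalently $\eta^{\mathcal A}_f$ invertible), $\rho_f\colon f_!\Rightarrow f_*$ is $f_!\xRightarrow{\eta^{\mathcal B}_f}f_*f^*f_!\xRightarrow{(\eta^{\mathcal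 A}_f)^{-1}}f_*$. *)

(* Defs.v *)
Set Implicit Arguments.

Record BicatData := {
  ob : Type;
  hom : ob -> ob -> Type;
  cell : forall a b, hom a b -> hom a b -> Type;
  id1 : forall a, hom a a;
  comp1 : forall a b c, hom b c -> hom a b -> hom a c;   (* comp1 g f = g o f *)
  id2 : forall a b (f : hom a b), cell f f;
  vcomp : forall a b (f g h : hom a b), cell g h -> cell f g -> cell f h;
  hcomp : forall a b c (g g' : hom b c) (f f' : hom a b),
      cell g g' -> cell f f' -> cell (comp1 g f) (comp1 g' f');
  assoc : forall a b c d (h : hom c d) (g : hom b c) (f : hom a b),
      cell (comp1 h (comp1 g f)) (comp1 (comp1 h g) f);
  assoc_inv : forall a b c d (h : hom c d) (g : hom b c) (f : hom a b),
      cell (comp1 (comp1 h g) f) (comp1 h (comp1 g f));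
  lunit : forall a b (f : hom a b), cell (comp1 (id1 b) f) f;
  lunit_inv : forall a b (f : hom a b), cell f (comp1 (id1 b) f);
  runit : forall a b (f : hom a b), cell (comp1 f (id1 a)) f;
  runit_inv : forall a b (f : hom a b), cell f (comp1 f (id1 a))
}.

Arguments hom {b0} _ _.
Arguments cell {b0 a b} _ _.
Arguments id1 {b0} a.
Arguments comp1 {b0 a b c} _ _.
Arguments id2 {b0 a b} f.
Arguments vcomp {b0 a b f g h} _ _.
Arguments hcomp {b0 a b c g g' f f'} _ _.
Arguments assoc {b0 a b c d} h g f.
Arguments assoc_inv {b0 a b c d} h g f.
Arguments lunit {b0 a b} f.
Arguments lunit_inv {b0 a b} f.
Arguments runit {b0 a b} f.
Arguments runit_inv {b0 a b} f.

(* diagrammatic vertical composition: first [x], then [y] *)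
Notation "x >>> y" := (vcomp y x) (at level 50, left associativity).

Record BicatLaws (B : BicatData) : Prop := {
  vid_l : forall (a b : ob B) (f g : hom a b) (x : cell f g), vcomp (id2 g) x = x;
  vid_r : forall (a b : ob B) (f g : hom a b) (x : cell f g), vcomp x (id2 f) = x;
  vassoc : forall (a b : ob B) (f g h k : hom a b) (x : cell f g) (y : cell g h) (z : cell h k),
      vcomp z (vcomp y x) = vcomp (vcomp z y) x;
  hcomp_id : forall (a b c : ob B) (g : hom b c) (f : hom a b),
      hcomp (id2 g) (id2 f) = id2 (comp1 g f);
  interchange : forall (a b c : ob B) (g g' g'' : hom b c) (f f' f'' : hom a b)
      (y : cell g g') (y' : cell g' g'') (x : cell f f') (x' : cell f' f''),
      hcomp (vcomp y' y) (vcomp x' x) = vcomp (hcomp y' x') (hcomp y x);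
  assoc_nat : forall (a b c d : ob B) (h h' : hom c d) (g g' : hom b c) (f f' : hom a b)
      (z : cell h h') (y : cell g g') (x : cell f f'),
      vcomp (assoc h' g' f') (hcomp z (hcomp y x))
      = vcomp (hcomp (hcomp z y) x) (assoc h g f);
  assoc_iso1 : forall (a b c d : ob B) (h : hom c d) (g : hom b c) (f : hom a b),
      vcomp (assoc_inv h g f) (assoc h g f) = id2 _;
  assoc_iso2 : forall (a b c d : ob B) (h : hom c d) (g : hom b c) (f : hom a b),
      vcomp (assoc h g f) (assoc_inv h g f) = id2 _;
  lunit_nat : forall (a b : ob B) (f f' : hom a b) (x : cell f f'),
      vcomp (lunit f') (hcomp (id2 (id1 b)) x) = vcomp x (lunit f);
  runit_nat : forall (a b : ob B) (f f' : hom a b) (x : cell f f'),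
      vcomp (runit f') (hcomp x (id2 (id1 a))) = vcomp x (runit f);
  lunit_iso1 : forall (a b : ob B) (f : hom a b), vcomp (lunit_inv f) (lunit f) = id2 _;
  lunit_iso2 : forall (a b : ob B) (f : hom a b), vcomp (lunit f) (lunit_inv f) = id2 _;
  runit_iso1 : forall (a b : ob B) (f : hom a b), vcomp (runit_inv f) (runit f) = id2 _;
  runit_iso2 : forall (a b : ob B) (f : hom a b), vcomp (runit f) (runit_inv f) = id2 _;
  pentagon : forall (a b c d e : ob B) (k : hom d e) (h : hom c d) (g : hom b c) (f : hom a b),
      vcomp (assoc (comp1 k h) g f) (assoc k h (comp1 g f))
      = vcomp (hcomp (assoc k h g) (id2 f))
          (vcomp (assoc k (comp1 h g) f) (hcomp (id2 k) (assoc h g f)));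
  triangle : forall (a b c : ob B) (g : hom b c) (f : hom a b),
      vcomp (hcomp (runit g) (id2 f)) (assoc g (id1 b) f) = hcomp (id2 g) (lunit f)
}.

Record Bicat := { bdata :> BicatData; blaws : BicatLaws bdata }.

Definition IsStrict (B : BicatData) : Prop :=
  (forall (a b c d : ob B) (h : hom c d) (g : hom b c) (f : hom a b),
      exists e : comp1 h (comp1 g f) = comp1 (comp1 h g) f,
        assoc h g f = eq_rect _ (fun k => cell (comp1 h (comp1 g f)) k)
                              (id2 (comp1 h (comp1 g f))) _ e) /\
  (forall (a b : ob B) (f : hom a b),
      exists e : comp1 (id1 b) f = f,
        lunit f = eq_rect _ (fun k => cell (comp1 (id1 b) f) k)
                          (id2 (comp1 (id1 b) f)) _ e) /\
  (forall (a b : ob B) (f : hom a b),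
      exists e : comp1 f (id1 a) = f,
        runit f = eq_rect _ (fun k => cell (comp1 f (id1 a)) k)
                          (id2 (comp1 f (id1 a))) _ e).

Definition IsInverse {B : BicatData} {a b : ob B} {f g : hom a b}
  (x : cell f g) (y : cell g f) : Prop :=
  vcomp y x = id2 f /\ vcomp x y = id2 g.

Definition IsIso {B : BicatData} {a b : ob B} {f g : hom a b} (x : cell f g) : Prop :=
  exists y : cell g f, IsInverse x y.

Definition IsAdj {B : BicatData} {a b : ob B} (L : hom a b) (R : hom b a)
  (eta : cell (id1 a) (comp1 R L)) (eps : cell (comp1 L R) (id1 b)) : Prop :=
  runit_inv L >>> hcomp (id2 L) eta >>> assoc L R L >>> hcomp eps (id2 L) >>> lunit L
    = id2 L /\
  lunit_inv R >>> hcomp eta (id2 R) >>> assoc_inv R L R >>> hcomp (id2 R) eps >>> runit R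
    = id2 R.

Definition adj_comp_unit {B : BicatData} {x y z : ob B} (L1 : hom x y) (R1 : hom y x)
  (L2 : hom y z) (R2 : hom z y)
  (eta1 : cell (id1 x) (comp1 R1 L1)) (eta2 : cell (id1 y) (comp1 R2 L2))
  : cell (id1 x) (comp1 (comp1 R1 R2) (comp1 L2 L1)) :=
  eta1 >>> hcomp (runit_inv R1) (id2 L1) >>> hcomp (hcomp (id2 R1) eta2) (id2 L1)
       >>> hcomp (assoc R1 R2 L2) (id2 L1) >>> assoc_inv (comp1 R1 R2) L2 L1.

Definition adj_comp_counit {B : BicatData} {x y z : ob B} (L1 : hom x y) (R1 : hom y x)
  (L2 : hom y z) (R2 : hom z y)
  (eps1 : cell (comp1 L1 R1) (id1 y)) (eps2 : cell (comp1 L2 R2) (id1 z))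
  : cell (comp1 (comp1 L2 L1) (comp1 R1 R2)) (id1 z) :=
  assoc_inv L2 L1 (comp1 R1 R2) >>> hcomp (id2 L2) (assoc L1 R1 R2)
    >>> hcomp (id2 L2) (hcomp eps1 (id2 R2)) >>> hcomp (id2 L2) (lunit R2) >>> eps2.

Definition right_mate {B : BicatData} {a b : ob B} (L L' : hom b a) (R R' : hom a b)
  (eta' : cell (id1 b) (comp1 R' L')) (eps : cell (comp1 L R) (id1 a))
  (s : cell L' L) : cell R R' :=
  lunit_inv R >>> hcomp eta' (id2 R) >>> assoc_inv R' L' R
    >>> hcomp (id2 R') (hcomp s (id2 R)) >>> hcomp (id2 R') eps >>> runit R'.

Definition left_mate {B : BicatData} {a b : ob B} (L L' : hom a b) (R R' : hom b a)
  (eta' : cell (id1 a) (comp1 R' L')) (eps : cell (comp1 L R) (id1 b))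
  (s : cell R' R) : cell L L' :=
  runit_inv L >>> hcomp (id2 L) eta' >>> hcomp (id2 L) (hcomp s (id2 L'))
    >>> assoc L R L' >>> hcomp eps (id2 L') >>> lunit L'.

Record Sub2 (C : BicatData) := {
  sob : ob C -> Prop;
  smor : forall a b, @hom C a b -> Prop;
  smor_src : forall (a b : ob C) (f : hom a b), smor a b f -> sob a;
  smor_tgt : forall (a b : ob C) (f : hom a b), smor a b f -> sob b;
  sid : forall (a : ob C), sob a -> smor a a (id1 a);
  scomp : forall (a b c : ob C) (f : hom a b) (g : hom b c), smor a b f -> smor b c g -> smor a c (comp1 g f)
}.
Arguments sob {C} _ _.
Arguments smor {C} _ {a b} f.
Arguments smor_src {C s a b f} _.
Arguments smor_tgt {C s a b f} _.
Arguments sid {C s a} _.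
Arguments scomp {C s a b c f g} _ _.

Record CoopPsfunData (C D : BicatData) := {
  F0 : ob C -> ob D;
  star : forall a b, @hom C a b -> hom (F0 b) (F0 a);
  star2 : forall (a b : ob C) (f g : hom a b), cell f g -> cell (star a b g) (star a b f);
  scmp : forall (a b c : ob C) (f : hom a b) (g : hom b c),
      cell (comp1 (star a b f) (star b c g)) (star a c (comp1 g f));
  scmp_inv : forall (a b c : ob C) (f : hom a b) (g : hom b c),
      cell (star a c (comp1 g f)) (comp1 (star a b f) (star b c g));
  sunit : forall (a : ob C), cell (id1 (F0 a)) (star a a (id1 a));
  sunit_inv : forall (a : ob C), cell (star a a (id1 a)) (id1 (F0 a))
}.
Arguments F0 {C D} _ a.
Arguments star {C D} _ {a b} _.
Arguments star2 {C D} _ {a b f g} _.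
Arguments scmp {C D} _ {a b c} f g.
Arguments scmp_inv {C D} _ {a b c} f g.
Arguments sunit {C D} _ a.
Arguments sunit_inv {C D} _ a.

Record CoopPsfunLaws {C D : BicatData} (P : CoopPsfunData C D) : Prop := {
  star2_id : forall (a b : ob C) (f : @hom C a b), star2 P (id2 f) = id2 (star P f);
  star2_comp : forall (a b : ob C) (f g h : @hom C a b) (x : cell f g) (y : cell g h),
      star2 P (vcomp y x) = vcomp (star2 P x) (star2 P y);
  scmp_iso : forall (a b c : ob C) (f : @hom C a b) (g : hom b c),
      IsInverse (scmp P f g) (scmp_inv P f g);
  scmp_nat : forall (a b c : ob C) (f f' : @hom C a b) (g g' : hom b c) (x : cell f f') (y : cell g g'),
      vcomp (scmp P f g) (hcomp (star2 P x) (star2 P y))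
      = vcomp (star2 P (hcomp y x)) (scmp P f' g');
  sunit_iso : forall (a : ob C), IsInverse (sunit P a) (sunit_inv P a);
  scmp_assoc : forall (a b c d : ob C) (f : @hom C a b) (g : hom b c) (h : hom c d),
      vcomp (scmp P f (comp1 h g)) (hcomp (id2 (star P f)) (scmp P g h))
      = vcomp (star2 P (assoc_inv h g f))
          (vcomp (scmp P (comp1 g f) h)
             (vcomp (hcomp (scmp P f g) (id2 (star P h)))
                (assoc (star P f) (star P g) (star P h))));
  scmp_lunit : forall (a b : ob C) (f : @hom C a b),
      lunit_inv (star P f) >>> hcomp (sunit P a) (id2 (star P f))
        >>> scmp P (id1 a) f >>> star2 P (runit_inv f) = id2 (star P f);
  scmp_runit : forall (a b : ob C) (f : @hom C a b),
      runit_inv (star P f) >>> hcomp (id2 (star P f)) (sunit P b)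
        >>> scmp P f (id1 b) >>> star2 P (lunit_inv f) = id2 (star P f)
}.

Record CoopPsfun (C D : BicatData) :=
  { cpdata :> CoopPsfunData C D; cplaws : CoopPsfunLaws cpdata }.

Record SubPsfunData (C D : BicatData) (S : Sub2 C) (G0 : ob C -> ob D) := {
  fmap : forall (a b : ob C) (f : @hom C a b), smor S f -> hom (G0 a) (G0 b);
  fmap2 : forall (a b : ob C) (f g : @hom C a b) (pf : smor S f) (pg : smor S g),
      cell f g -> cell (fmap a b f pf) (fmap a b g pg);
  pcmp : forall (a b c : ob C) (f : @hom C a b) (g : hom b c) (pf : smor S f) (pg : smor S g),
      cell (comp1 (fmap b c g pg) (fmap a b f pf)) (fmap a c (comp1 g f) (scomp pf pg));
  pcmp_inv : forall (a b c : ob C) (f : @hom C a b) (g : hom b c) (pf : smor S f) (pg : smor S g),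
      cell (fmap a c (comp1 g f) (scomp pf pg)) (comp1 (fmap b c g pg) (fmap a b f pf));
  punit : forall (a : ob C) (ha : sob S a), cell (id1 (G0 a)) (fmap a a (id1 a) (sid ha));
  punit_inv : forall (a : ob C) (ha : sob S a), cell (fmap a a (id1 a) (sid ha)) (id1 (G0 a))
}.
Arguments fmap {C D S G0} _ {a b f} _.
Arguments fmap2 {C D S G0} _ {a b f g} pf pg _.
Arguments pcmp {C D S G0} _ {a b c f g} pf pg.
Arguments pcmp_inv {C D S G0} _ {a b c f g} pf pg.
Arguments punit {C D S G0} _ {a} ha.
Arguments punit_inv {C D S G0} _ {a} ha.

Record SubPsfunLaws {C D : BicatData} {S : Sub2 C} {G0 : ob C -> ob D}
  (P : SubPsfunData D S G0) : Prop := {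
  fmap2_id : forall (a b : ob C) (f : @hom C a b) (pf : smor S f),
      fmap2 P pf pf (id2 f) = id2 (fmap P pf);
  fmap2_comp : forall (a b : ob C) (f g h : @hom C a b) (pf : smor S f) (pg : smor S g)
      (ph : smor S h) (x : cell f g) (y : cell g h),
      fmap2 P pf ph (vcomp y x) = vcomp (fmap2 P pg ph y) (fmap2 P pf pg x);
  pcmp_iso : forall (a b c : ob C) (f : @hom C a b) (g : hom b c) (pf : smor S f) (pg : smor S g),
      IsInverse (pcmp P pf pg) (pcmp_inv P pf pg);
  pcmp_nat : forall (a b c : ob C) (f f' : @hom C a b) (g g' : hom b c)
      (pf : smor S f) (pf' : smor S f') (pg : smor S g) (pg' : smor S g')
      (x : cell f f') (y : cell g g'),
      vcomp (pcmp P pf' pg') (hcomp (fmap2 P pg pg' y) (fmap2 P pf pf' x))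
      = vcomp (fmap2 P (scomp pf pg) (scomp pf' pg') (hcomp y x)) (pcmp P pf pg);
  punit_iso : forall (a : ob C) (ha : sob S a), IsInverse (punit P ha) (punit_inv P ha);
  pcmp_assoc : forall (a b c d : ob C) (f : @hom C a b) (g : hom b c) (h : hom c d)
      (pf : smor S f) (pg : smor S g) (ph : smor S h),
      vcomp (pcmp P pf (scomp pg ph)) (hcomp (pcmp P pg ph) (id2 (fmap P pf)))
      = vcomp (fmap2 P (scomp (scomp pf pg) ph) (scomp pf (scomp pg ph)) (assoc h g f))
          (vcomp (pcmp P (scomp pf pg) ph)
             (vcomp (hcomp (id2 (fmap P ph)) (pcmp P pf pg))
                (assoc_inv (fmap P ph) (fmap P pg) (fmap P pf))));
  pcmp_lunit : forall (a b : ob C) (f : @hom C a b) (pf : smor S f),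
      lunit_inv (fmap P pf) >>> hcomp (punit P (smor_tgt pf)) (id2 (fmap P pf))
        >>> pcmp P pf (sid (smor_tgt pf))
        >>> fmap2 P (scomp pf (sid (smor_tgt pf))) pf (lunit f) = id2 (fmap P pf);
  pcmp_runit : forall (a b : ob C) (f : @hom C a b) (pf : smor S f),
      runit_inv (fmap P pf) >>> hcomp (id2 (fmap P pf)) (punit P (smor_src pf))
        >>> pcmp P (sid (smor_src pf)) pf
        >>> fmap2 P (scomp (sid (smor_src pf)) pf) pf (runit f) = id2 (fmap P pf)
}.

Record SubPsfun (C D : BicatData) (S : Sub2 C) (G0 : ob C -> ob D) :=
  { spdata :> SubPsfunData D S G0; splaws : SubPsfunLaws spdata }.

Record SettingData (C D : BicatData) := {
  SA : Sub2 C;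
  SB : Sub2 C;
  st : CoopPsfun C D;                               (* f |-> f^*   *)
  shr : SubPsfun D SA (F0 st);                      (* i |-> i_!   *)
  psh : SubPsfun D SB (F0 st);                      (* p |-> p_*   *)
  etaA : forall (a b : ob C) (f : @hom C a b) (pf : smor SA f),
      cell (id1 (F0 st a)) (comp1 (star st f) (fmap shr pf));
  epsA : forall (a b : ob C) (f : @hom C a b) (pf : smor SA f),
      cell (comp1 (fmap shr pf) (star st f)) (id1 (F0 st b));
  etaB : forall (a b : ob C) (f : @hom C a b) (pf : smor SB f),
      cell (id1 (F0 st b)) (comp1 (fmap psh pf) (star st f));
  epsB : forall (a b : ob C) (f : @hom C a b) (pf : smor SB f),
      cell (comp1 (star st f) (fmap psh pf)) (id1 (F0 st a))
}.
Arguments SA {C D} _.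
Arguments SB {C D} _.
Arguments st {C D} _.
Arguments shr {C D} _.
Arguments psh {C D} _.
Arguments etaA {C D} _ {a b f} pf.
Arguments epsA {C D} _ {a b f} pf.
Arguments etaB {C D} _ {a b f} pf.
Arguments epsB {C D} _ {a b f} pf.

Record SettingLaws {C D : BicatData} (s : SettingData C D) : Prop := {
  adjA : forall (a b : ob C) (f : @hom C a b) (pf : smor (SA s) f),
      IsAdj (fmap (shr s) pf) (star (st s) f) (etaA s pf) (epsA s pf);
  adjB : forall (a b : ob C) (f : @hom C a b) (pf : smor (SB s) f),
      IsAdj (star (st s) f) (fmap (psh s) pf) (etaB s pf) (epsB s pf);
  mateA : forall (a b : ob C) (f g : @hom C a b) (pf : smor (SA s) f) (pg : smor (SA s) g)
      (x : cell f g),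
      fmap2 (shr s) pf pg x
      = left_mate (fmap (shr s) pf) (fmap (shr s) pg) (star (st s) f) (star (st s) g)
          (etaA s pg) (epsA s pf) (star2 (st s) x);
  mateB : forall (a b : ob C) (f g : @hom C a b) (pf : smor (SB s) f) (pg : smor (SB s) g)
      (x : cell f g),
      fmap2 (psh s) pf pg x
      = right_mate (star (st s) f) (star (st s) g) (fmap (psh s) pf) (fmap (psh s) pg)
          (etaB s pg) (epsB s pf) (star2 (st s) x);
  compA_unit : forall (a b c : ob C) (f : @hom C a b) (g : hom b c)
      (pf : smor (SA s) f) (pg : smor (SA s) g),
      etaA s (scomp pf pg)
      = adj_comp_unit (fmap (shr s) pf) (star (st s) f) (fmap (shr s) pg) (star (st s) g)
          (etaA s pf) (etaA s pg)
        >>> hcomp (scmp (st s) f g) (pcmp (shr s) pf pg);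
  compA_counit : forall (a b c : ob C) (f : @hom C a b) (g : hom b c)
      (pf : smor (SA s) f) (pg : smor (SA s) g),
      hcomp (pcmp (shr s) pf pg) (scmp (st s) f g) >>> epsA s (scomp pf pg)
      = adj_comp_counit (fmap (shr s) pf) (star (st s) f) (fmap (shr s) pg) (star (st s) g)
          (epsA s pf) (epsA s pg);
  compB_unit : forall (a b c : ob C) (f : @hom C a b) (g : hom b c)
      (pf : smor (SB s) f) (pg : smor (SB s) g),
      etaB s (scomp pf pg)
      = adj_comp_unit (star (st s) g) (fmap (psh s) pg) (star (st s) f) (fmap (psh s) pf)
          (etaB s pg) (etaB s pf)
        >>> hcomp (pcmp (psh s) pf pg) (scmp (st s) f g);
  compB_counit : forall (a b c : ob C) (f : @hom C a b) (g : hom b c)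
      (pf : smor (SB s) f) (pg : smor (SB s) g),
      hcomp (scmp (st s) f g) (pcmp (psh s) pf pg) >>> epsB s (scomp pf pg)
      = adj_comp_counit (star (st s) g) (fmap (psh s) pg) (star (st s) f) (fmap (psh s) pf)
          (epsB s pg) (epsB s pf);
  idA_unit : forall (a : ob C) (ha : sob (SA s) a),
      etaA s (sid ha) = lunit_inv (id1 (F0 (st s) a)) >>> hcomp (sunit (st s) a) (punit (shr s) ha);
  idA_counit : forall (a : ob C) (ha : sob (SA s) a),
      hcomp (punit (shr s) ha) (sunit (st s) a) >>> epsA s (sid ha) = lunit (id1 (F0 (st s) a));
  idB_unit : forall (a : ob C) (ha : sob (SB s) a),
      etaB s (sid ha) = lunit_inv (id1 (F0 (st s) a)) >>> hcomp (punit (psh s) ha) (sunit (st s) a);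
  idB_counit : forall (a : ob C) (ha : sob (SB s) a),
      hcomp (sunit (st s) a) (punit (psh s) ha) >>> epsB s (sid ha) = lunit (id1 (F0 (st s) a))
}.

Record Setting (C D : BicatData) :=
  { sdata :> SettingData C D; slaws : SettingLaws sdata }.

Definition B_D {C D : BicatData} (s : SettingData C D) {X Y Z W : ob C}
  (j : hom X Y) (q : hom X Z) (i : hom Z W) (p : hom Y W)
  (al : cell (comp1 p j) (comp1 i q)) (pp : smor (SB s) p) (pq : smor (SB s) q)
  : cell (comp1 (star (st s) i) (fmap (psh s) pp)) (comp1 (fmap (psh s) pq) (star (st s) j)) :=
  let ps := fmap (psh s) pp in
  let qs := fmap (psh s) pq in
  lunit_inv (comp1 (star (st s) i) ps)
  >>> hcomp (etaB s pq) (id2 (comp1 (star (st s) i) ps))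
  >>> assoc_inv qs (star (st s) q) (comp1 (star (st s) i) ps)
  >>> hcomp (id2 qs) (assoc (star (st s) q) (star (st s) i) ps)
  >>> hcomp (id2 qs) (hcomp (scmp (st s) q i) (id2 ps))
  >>> hcomp (id2 qs) (hcomp (star2 (st s) al) (id2 ps))
  >>> hcomp (id2 qs) (hcomp (scmp_inv (st s) j p) (id2 ps))
  >>> hcomp (id2 qs) (assoc_inv (star (st s) j) (star (st s) p) ps)
  >>> hcomp (id2 qs) (hcomp (id2 (star (st s) j)) (epsB s pp))
  >>> hcomp (id2 qs) (runit (star (st s) j)).

Definition A_D {C D : BicatData} (s : SettingData C D) {X Y Z W : ob C}
  (j : hom X Y) (q : hom X Z) (i : hom Z W) (p : hom Y W)
  (al : cell (comp1 p j) (comp1 i q)) (pi : smor (SA s) i) (pj : smor (SA s) j)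
  : cell (comp1 (fmap (shr s) pj) (star (st s) q)) (comp1 (star (st s) p) (fmap (shr s) pi)) :=
  let is_ := fmap (shr s) pi in
  let js := fmap (shr s) pj in
  runit_inv (comp1 js (star (st s) q))
  >>> hcomp (id2 (comp1 js (star (st s) q))) (etaA s pi)
  >>> assoc_inv js (star (st s) q) (comp1 (star (st s) i) is_)
  >>> hcomp (id2 js) (assoc (star (st s) q) (star (st s) i) is_)
  >>> hcomp (id2 js) (hcomp (scmp (st s) q i) (id2 is_))
  >>> hcomp (id2 js) (hcomp (star2 (st s) al) (id2 is_))
  >>> hcomp (id2 js) (hcomp (scmp_inv (st s) j p) (id2 is_))
  >>> hcomp (id2 js) (assoc_inv (star (st s) j) (star (st s) p) is_)
  >>> assoc js (star (st s) j) (comp1 (star (st s) p) is_)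
  >>> hcomp (epsA s pj) (id2 (comp1 (star (st s) p) is_))
  >>> lunit (comp1 (star (st s) p) is_).

Definition rho {C D : BicatData} (s : SettingData C D) {a b : ob C} (f : hom a b)
  (pA : smor (SA s) f) (pB : smor (SB s) f)
  (etaAinv : cell (comp1 (star (st s) f) (fmap (shr s) pA)) (id1 (F0 (st s) a)))
  : cell (fmap (shr s) pA) (fmap (psh s) pB) :=
  lunit_inv (fmap (shr s) pA)
  >>> hcomp (etaB s pB) (id2 (fmap (shr s) pA))
  >>> assoc_inv (fmap (psh s) pB) (star (st s) f) (fmap (shr s) pA)
  >>> hcomp (id2 (fmap (psh s) pB)) etaAinv
  >>> runit (fmap (psh s) pB).

(* Main.v *)
Require Import Defs.
From Stdlib Require Import ProofIrrelevance Setoid.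

Notation lw f x := (hcomp (id2 f) x).
Notation rw x f := (hcomp x (id2 f)).

Definition tr {B : BicatData} {a b} {f g : @hom B a b} (e : f = g) : cell f g :=
  eq_rect f (fun k => cell f k) (id2 f) g e.

Definition IsStr {B : BicatData} {a b} {f g : @hom B a b} (x : cell f g) : Prop :=
  exists e : f = g, x = tr e.

Lemma vA (B : Bicat) a b (f g h k : @hom B a b) (x : cell f g) (y : cell g h) (z : cell h k) :
  vcomp z (vcomp y x) = vcomp (vcomp z y) x.
Proof. apply (vassoc (blaws B)). Qed.

Lemma str_unique (B : Bicat) a b (f g : @hom B a b) (x y : cell f g) :
  IsStr x -> IsStr y -> x = y.
Proof. intros [e1 ->] [e2 ->]. f_equal. apply proof_irrelevance. Qed.

Lemma str_tr (B : BicatData) a b (f g : @hom B a b) (e : f = g) : IsStr (tr e).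
Proof. exists e; reflexivity. Qed.

Lemma str_id2 (B : BicatData) a b (f : @hom B a b) : IsStr (id2 f).
Proof. exists eq_refl; reflexivity. Qed.

Lemma str_vcomp (B : Bicat) a b (f g h : @hom B a b) (x : cell f g) (y : cell g h) :
  IsStr x -> IsStr y -> IsStr (vcomp y x).
Proof. intros [e1 ->] [e2 ->]. exists (eq_trans e1 e2). destruct e2, e1. simpl.
  apply (vid_l (blaws B)). Qed.

Lemma str_hcomp (B : Bicat) a b c (g g' : @hom B b c) (f f' : hom a b) (y : cell g g') (x : cell f f') :
  IsStr y -> IsStr x -> IsStr (hcomp y x).
Proof. intros [e1 ->] [e2 ->]. destruct e2, e1. exists eq_refl. simpl.
  apply (hcomp_id (blaws B)). Qed.

Lemma str_inv (B : Bicat) a b (f g : @hom B a b) (x : cell f g) (y : cell g f) :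
  IsStr x -> vcomp y x = id2 f -> IsStr y.
Proof. intros [e ->] H. exists (eq_sym e). destruct e. simpl in *.
  rewrite (vid_r (blaws B)) in H. exact H. Qed.

Lemma str_assoc (B : Bicat) (HB : IsStrict B) a b c d (h : @hom B c d) (g : hom b c) (f : hom a b) :
  IsStr (assoc h g f).
Proof. destruct HB as [H _]. destruct (H _ _ _ _ h g f) as [e He]. exists e. exact He. Qed.
Lemma str_lunit (B : Bicat) (HB : IsStrict B) a b (f : @hom B a b) : IsStr (lunit f).
Proof. destruct HB as [_ [H _]]. destruct (H _ _ f) as [e He]. exists e. exact He. Qed.
Lemma str_runit (B : Bicat) (HB : IsStrict B) a b (f : @hom B a b) : IsStr (runit f).
Proof. destruct HB as [_ [_ H]]. destruct (H _ _ f) as [e He]. exists e. exact He. Qed.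
Lemma str_assoc_inv (B : Bicat) (HB : IsStrict B) a b c d (h : @hom B c d) (g : hom b c) (f : hom a b) :
  IsStr (assoc_inv h g f).
Proof. eapply str_inv. apply str_assoc; auto. apply (assoc_iso1 (blaws B)). Qed.
Lemma str_lunit_inv (B : Bicat) (HB : IsStrict B) a b (f : @hom B a b) : IsStr (lunit_inv f).
Proof. eapply str_inv. apply str_lunit; auto. apply (lunit_iso1 (blaws B)). Qed.
Lemma str_runit_inv (B : Bicat) (HB : IsStrict B) a b (f : @hom B a b) : IsStr (runit_inv f).
Proof. eapply str_inv. apply str_runit; auto. apply (runit_iso1 (blaws B)). Qed.

Create HintDb str discriminated.
#[export] Hint Resolve str_tr str_id2 str_vcomp str_hcomp str_assoc str_lunit str_runit
  str_assoc_inv str_lunit_inv str_runit_inv : str.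

Lemma merge (B : Bicat) a b (f g h k : @hom B a b) (x : cell f g) (y : cell g h) (z : cell h k) :
  vcomp z (vcomp y x) = vcomp (vcomp z y) x.
Proof. apply vA. Qed.

Lemma endo_l (B : Bicat) a b (f g : @hom B a b) (s : cell g g) (w : cell f g) :
  IsStr s -> vcomp s w = w.
Proof. intro H. rewrite (str_unique _ _ _ _ _ s (id2 g)); auto with str. apply (vid_l (blaws B)). Qed.
Lemma endo_r (B : Bicat) a b (f g : @hom B a b) (s : cell f f) (w : cell f g) :
  IsStr s -> vcomp w s = w.
Proof. intro H. rewrite (str_unique _ _ _ _ _ s (id2 f)); auto with str. apply (vid_r (blaws B)). Qed.

Lemma vcong (B : BicatData) a b (f g h : @hom B a b) (x x' : cell f g) (y y' : cell g h) :
  x = x' -> y = y' -> vcomp y x = vcomp y' x'.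
Proof. intros -> ->; reflexivity. Qed.

Ltac norm := repeat rewrite <- vA.

Ltac collapse HB :=
  repeat match goal with
  | |- context [vcomp ?s2 (vcomp ?s1 ?w)] =>
      let H1 := fresh in let H2 := fresh in
      assert (H1 : IsStr s1) by (clear -HB; auto 20 with str);
      assert (H2 : IsStr s2) by (clear -HB; auto 20 with str);
      clear H1 H2;
      rewrite (merge _ _ _ _ _ _ _ w s1 s2)
  end;
  repeat match goal with
  | |- context [@vcomp _ _ _ ?f ?g ?g ?s ?w] =>
      let H1 := fresh in
      assert (H1 : IsStr s) by (clear -HB; auto 20 with str);
      rewrite (endo_l _ _ _ _ _ s w H1); clear H1
  | |- context [@vcomp _ _ _ ?f ?f ?g ?w ?s] =>
      let H1 := fresh in
      assert (H1 : IsStr s) by (clear -HB; auto 20 with str);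
      rewrite (endo_r _ _ _ _ _ s w H1); clear H1
  end.

Ltac finish HB :=
  repeat (reflexivity || apply vcong || (apply str_unique; auto 20 with str)).


Lemma lw_comp {B : Bicat} {a b c} (h : @hom B b c) {f g k : hom a b} (x : cell f g) (y : cell g k) :
  lw h (vcomp y x) = vcomp (lw h y) (lw h x).
Proof. rewrite <- (interchange (blaws B)). rewrite (vid_l (blaws B)). reflexivity. Qed.

Lemma rw_comp {B : Bicat} {a b c} (h : @hom B a b) {f g k : hom b c} (x : cell f g) (y : cell g k) :
  rw (vcomp y x) h = vcomp (rw y h) (rw x h).
Proof. rewrite <- (interchange (blaws B)). rewrite (vid_l (blaws B)). reflexivity. Qed.

Lemma IC {B : Bicat} {a b c} {f f' : @hom B b c} {g g' : hom a b} (x : cell f f') (y : cell g g') :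
  vcomp (lw f' y) (rw x g) = vcomp (rw x g') (lw f y).
Proof. rewrite <- !(interchange (blaws B)). rewrite !(vid_l (blaws B)), !(vid_r (blaws B)). reflexivity. Qed.

Lemma ICc {B : Bicat} {a b c} {f f' : @hom B b c} {g g' : hom a b} (x : cell f f') (y : cell g g')
  {k} (w : cell k (comp1 f g)) :
  vcomp (lw f' y) (vcomp (rw x g) w) = vcomp (rw x g') (vcomp (lw f y) w).
Proof. rewrite !vA, IC. reflexivity. Qed.

Lemma conj1 {B : Bicat} {a b} {f1 f2 g1 g2 : @hom B a b} (X : cell f1 f2) (Y : cell g1 g2)
  (s : cell f1 g1) (s' : cell f2 g2) (si : cell g1 f1) :
  vcomp s' X = vcomp Y s -> vcomp s si = id2 g1 -> Y = vcomp s' (vcomp X si).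
Proof. intros H1 H2. rewrite vA, H1, <- vA, H2. symmetry; apply (vid_r (blaws B)). Qed.

Lemma conj2 {B : Bicat} {a b} {f1 f2 g1 g2 : @hom B a b} (X : cell f1 f2) (Y : cell g1 g2)
  (s : cell f1 g1) (s' : cell f2 g2) (si' : cell g2 f2) :
  vcomp s' X = vcomp Y s -> vcomp si' s' = id2 f2 -> X = vcomp si' (vcomp Y s).
Proof. intros H1 H2. rewrite <- H1, vA, H2. symmetry; apply (vid_l (blaws B)). Qed.

Lemma a1 {B : Bicat} {a b c d} {h h' : @hom B c d} (g : hom b c) (f : hom a b) (z : cell h h') :
  vcomp (assoc h' g f) (rw z (comp1 g f)) = vcomp (rw (rw z g) f) (assoc h g f).
Proof. rewrite <- (hcomp_id (blaws B)). apply (assoc_nat (blaws B)). Qed.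

Lemma a2 {B : Bicat} {a b c d} (h : @hom B c d) {g g' : hom b c} (f : hom a b) (y : cell g g') :
  vcomp (assoc h g' f) (lw h (rw y f)) = vcomp (rw (lw h y) f) (assoc h g f).
Proof. apply (assoc_nat (blaws B)). Qed.

Lemma a3 {B : Bicat} {a b c d} (h : @hom B c d) (g : hom b c) {f f' : hom a b} (x : cell f f') :
  vcomp (assoc h g f') (lw h (lw g x)) = vcomp (lw (comp1 h g) x) (assoc h g f).
Proof. rewrite <- (hcomp_id (blaws B)). apply (assoc_nat (blaws B)). Qed.

Lemma RR {B : Bicat} {a b c d} {h h' : @hom B c d} (g : hom b c) (f : hom a b) (z : cell h h') :
  rw (rw z g) f = vcomp (assoc h' g f) (vcomp (rw z (comp1 g f)) (assoc_inv h g f)).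
Proof. eapply conj1. apply a1. apply (assoc_iso2 (blaws B)). Qed.
Lemma RRi {B : Bicat} {a b c d} {h h' : @hom B c d} (g : hom b c) (f : hom a b) (z : cell h h') :
  rw z (comp1 g f) = vcomp (assoc_inv h' g f) (vcomp (rw (rw z g) f) (assoc h g f)).
Proof. eapply conj2. apply a1. apply (assoc_iso1 (blaws B)). Qed.
Lemma LRi {B : Bicat} {a b c d} (h : @hom B c d) {g g' : hom b c} (f : hom a b) (y : cell g g') :
  rw (lw h y) f = vcomp (assoc h g' f) (vcomp (lw h (rw y f)) (assoc_inv h g f)).
Proof. eapply conj1. apply a2. apply (assoc_iso2 (blaws B)). Qed.
Lemma LR {B : Bicat} {a b c d} (h : @hom B c d) {g g' : hom b c} (f : hom a b) (y : cell g g') :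
  lw h (rw y f) = vcomp (assoc_inv h g' f) (vcomp (rw (lw h y) f) (assoc h g f)).
Proof. eapply conj2. apply a2. apply (assoc_iso1 (blaws B)). Qed.
Lemma LLi {B : Bicat} {a b c d} (h : @hom B c d) (g : hom b c) {f f' : hom a b} (x : cell f f') :
  lw (comp1 h g) x = vcomp (assoc h g f') (vcomp (lw h (lw g x)) (assoc_inv h g f)).
Proof. eapply conj1. apply a3. apply (assoc_iso2 (blaws B)). Qed.
Lemma LL {B : Bicat} {a b c d} (h : @hom B c d) (g : hom b c) {f f' : hom a b} (x : cell f f') :
  lw h (lw g x) = vcomp (assoc_inv h g f') (vcomp (lw (comp1 h g) x) (assoc h g f)).
Proof. eapply conj2. apply a3. apply (assoc_iso1 (blaws B)). Qed.

Lemma Lu {B : Bicat} {a b} {f f' : @hom B a b} (x : cell f f') :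
  lw (id1 b) x = vcomp (lunit_inv f') (vcomp x (lunit f)).
Proof. eapply conj2. apply (lunit_nat (blaws B)). apply (lunit_iso1 (blaws B)). Qed.
Lemma Lui {B : Bicat} {a b} {f f' : @hom B a b} (x : cell f f') :
  x = vcomp (lunit f') (vcomp (lw (id1 b) x) (lunit_inv f)).
Proof. eapply conj1. apply (lunit_nat (blaws B)). apply (lunit_iso2 (blaws B)). Qed.
Lemma Ru {B : Bicat} {a b} {f f' : @hom B a b} (x : cell f f') :
  rw x (id1 a) = vcomp (runit_inv f') (vcomp x (runit f)).
Proof. eapply conj2. apply (runit_nat (blaws B)). apply (runit_iso1 (blaws B)). Qed.
Lemma Rui {B : Bicat} {a b} {f f' : @hom B a b} (x : cell f f') :
  x = vcomp (runit f') (vcomp (rw x (id1 a)) (runit_inv f)).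
Proof. eapply conj1. apply (runit_nat (blaws B)). apply (runit_iso2 (blaws B)). Qed.

Lemma R4 {B : Bicat} (HB : IsStrict B) {a b c} {f f' : @hom B b c} {g g' : hom a b} (x : cell f f')
  (s : cell g g') (t : cell g' g) : IsStr s -> IsStr t ->
  rw x g = vcomp (lw f' t) (vcomp (rw x g') (lw f s)).
Proof. intros Hs Ht. rewrite <- IC, vA, <- lw_comp.
  rewrite (str_unique _ _ _ _ _ (vcomp t s) (id2 g)); auto with str.
  rewrite (hcomp_id (blaws B)). symmetry; apply (vid_l (blaws B)). Qed.

Lemma L4 {B : Bicat} (HB : IsStrict B) {a b c} {f f' : @hom B b c} {g g' : hom a b} (y : cell g g')
  (s : cell f f') (t : cell f' f) : IsStr s -> IsStr t ->
  lw f y = vcomp (rw t g') (vcomp (lw f' y) (rw s g)).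
Proof. intros Hs Ht. rewrite IC, vA, <- rw_comp.
  rewrite (str_unique _ _ _ _ _ (vcomp t s) (id2 f)); auto with str.
  rewrite (hcomp_id (blaws B)). symmetry; apply (vid_l (blaws B)). Qed.

Ltac swapL x y := first [rewrite <- (ICc x y) | rewrite <- (IC x y)].
Ltac swapR x y := first [rewrite (ICc x y) | rewrite (IC x y)].

Lemma use_id {B : Bicat} {a b} {f g : @hom B a b} (c : cell f f) (y : cell f g) :
  c = id2 f -> vcomp y c = y.
Proof. intros ->; apply (vid_r (blaws B)). Qed.

Ltac insert_id_right Zw y :=
  match type of Zw with ?c = _ => transitivity (vcomp y c); [| apply use_id; exact Zw] end.

Ltac grp c1 c2 := first [rewrite (merge _ _ _ _ _ _ _ _ c1 c2) | idtac].
Lemma inv_cancel {B : Bicat} {a b} {f g : @hom B a b} (x : cell f g) (y : cell g f) {k} (w : cell k f) :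
  vcomp y x = id2 f -> vcomp y (vcomp x w) = w.
Proof. intro H. rewrite vA, H. apply (vid_l (blaws B)). Qed.

Lemma ICw {B : Bicat} {a b c d} (h : @hom B c d) {f f' : hom b c} {g g' : hom a b} (x : cell f f') (y : cell g g') :
  vcomp (lw h (lw f' y)) (lw h (rw x g)) = vcomp (lw h (rw x g')) (lw h (lw f y)).
Proof. rewrite <- !lw_comp, IC. reflexivity. Qed.
Lemma ICwc {B : Bicat} {a b c d} (h : @hom B c d) {f f' : hom b c} {g g' : hom a b} (x : cell f f') (y : cell g g')
  {k} (w : cell k (comp1 h (comp1 f g))) :
  vcomp (lw h (lw f' y)) (vcomp (lw h (rw x g)) w) = vcomp (lw h (rw x g')) (vcomp (lw h (lw f y)) w).
Proof. rewrite !vA, ICw. reflexivity. Qed.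
Ltac swapwL h x y := first [rewrite <- (ICwc h x y) | rewrite <- (ICw h x y)].

Lemma cancel_lr {B : Bicat} {a b c d} (h : @hom B c d) (k : hom a b) {f g : hom b c}
  (x : cell f g) (y : cell g f) {m} (w : cell m (comp1 h (comp1 f k))) :
  vcomp y x = id2 f -> vcomp (lw h (rw y k)) (vcomp (lw h (rw x k)) w) = w.
Proof. intro H. rewrite vA, <- lw_comp, <- rw_comp, H, !(hcomp_id (blaws B)). apply (vid_l (blaws B)). Qed.
Lemma cancel_ll {B : Bicat} {a b c d} (h : @hom B c d) (k : hom b c) {f g : hom a b}
  (x : cell f g) (y : cell g f) {m} (w : cell m (comp1 h (comp1 k f))) :
  vcomp y x = id2 f -> vcomp (lw h (lw k y)) (vcomp (lw h (lw k x)) w) = w.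
Proof. intro H. rewrite vA, <- lw_comp, <- lw_comp, H, !(hcomp_id (blaws B)). apply (vid_l (blaws B)). Qed.
Lemma ww_comb {B : Bicat} {a b c d} (h : @hom B c d) (k : hom b c) {f g g' : hom a b}
  (x : cell f g) (y : cell g g') {m} (w : cell m (comp1 h (comp1 k f))) :
  vcomp (lw h (lw k y)) (vcomp (lw h (lw k x)) w) = vcomp (lw h (lw k (vcomp y x))) w.
Proof. rewrite vA, <- lw_comp, <- lw_comp. reflexivity. Qed.
Lemma rr_comb {B : Bicat} {a b c} (k : @hom B a b) {f g g' : hom b c}
  (x : cell f g) (y : cell g g') {m} (w : cell m (comp1 f k)) :
  vcomp (rw y k) (vcomp (rw x k) w) = vcomp (rw (vcomp y x) k) w.
Proof. rewrite vA, <- rw_comp. reflexivity. Qed.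

Ltac r4 HB x s t := rewrite (R4 HB x s t ltac:(auto with str) ltac:(auto with str)).

Lemma K2 {B : Bicat} (HB : IsStrict B) {Z W : ob B} (I : @hom B W Z) (il ir : hom Z W)
  (hA : cell (id1 Z) (comp1 I il)) (hAi : cell (comp1 I il) (id1 Z))
  (hBi : cell (id1 W) (comp1 ir I)) (eBi : cell (comp1 I ir) (id1 Z))
  (zig : runit_inv I >>> hcomp (id2 I) hBi >>> assoc I ir I >>> hcomp eBi (id2 I) >>> lunit I = id2 I) :
  vcomp eBi (lw I (lunit_inv il >>> hcomp hBi (id2 il) >>> assoc_inv ir I il >>> hcomp (id2 ir) hAi >>> runit ir))
  = hAi.
Proof.
  rewrite !lw_comp. norm.
  rewrite (LL I ir hAi). rewrite (Rui eBi). norm.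
  collapse HB.
  swapL eBi hAi. rewrite (Lu hAi). norm. collapse HB.
  assert (Zw := f_equal (fun x => rw x il) zig). simpl in Zw.
  rewrite (hcomp_id (blaws B)) in Zw. rewrite !rw_comp in Zw.
  rewrite (RR I il eBi), (LRi I il hBi) in Zw. norm. rewrite <- !vA in Zw.
  insert_id_right Zw hAi. norm. collapse HB.
  finish HB.
Qed.


Lemma zagL {B : Bicat} (HB : IsStrict B) {X Y : ob B} (J : @hom B Y X) (jl : hom X Y)
  (hAj : cell (id1 X) (comp1 J jl)) (hAji : cell (comp1 J jl) (id1 X)) (eAj : cell (comp1 jl J) (id1 Y))
  (Hinv : IsInverse hAj hAji)
  (zag : lunit_inv J >>> hcomp hAj (id2 J) >>> assoc_inv J jl J >>> hcomp (id2 J) eAj >>> runit J = id2 J) :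
  lw J eAj = assoc J jl J >>> rw hAji J >>> lunit J >>> runit_inv J.
Proof.
  destruct Hinv as [H1 H2].
  assert (Hc : assoc J jl J >>> rw hAji J >>> lunit J >>> lunit_inv J >>> rw hAj J >>> assoc_inv J jl J
               = id2 _).
  { norm. collapse HB. grp (rw hAji J) (rw hAj J). rewrite <- rw_comp, H2, (hcomp_id (blaws B)), (vid_l (blaws B)).
    apply str_unique; auto with str. }
  rewrite <- (use_id _ (lw J eAj) Hc). norm.
  transitivity (assoc J jl J >>> rw hAji J >>> lunit J >>>
     (lunit_inv J >>> rw hAj J >>> assoc_inv J jl J >>> lw J eAj >>> runit J) >>> runit_inv J).
  - norm. collapse HB. finish HB.
  - rewrite zag. norm. collapse HB. finish HB.
Qed.

Lemma K1 {B : Bicat} (HB : IsStrict B) {X Y : ob B} (J : @hom B Y X) (jl jr : hom X Y)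
  (hAj : cell (id1 X) (comp1 J jl)) (hAji : cell (comp1 J jl) (id1 X)) (eAj : cell (comp1 jl J) (id1 Y))
  (hBj : cell (id1 Y) (comp1 jr J))
  (Hinv : IsInverse hAj hAji)
  (zag : lunit_inv J >>> hcomp hAj (id2 J) >>> assoc_inv J jl J >>> hcomp (id2 J) eAj >>> runit J = id2 J) :
  vcomp hBj eAj = rw (lunit_inv jl >>> hcomp hBj (id2 jl) >>> assoc_inv jr J jl >>> hcomp (id2 jr) hAji >>> runit jr) J.
Proof.
  rewrite (Rui hBj) at 1. rewrite (Lui eAj). norm. collapse HB.
  swapL hBj eAj.
  rewrite (LLi jr J eAj), (zagL HB J jl hAj hAji eAj Hinv zag).
  rewrite !lw_comp, !rw_comp. rewrite (RR jl J hBj), (LRi jr J hAji). norm. collapse HB.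

  finish HB.
Qed.

Lemma gen_main {B : Bicat} (HB : IsStrict B) {X Y Z W : ob B}
  (Q : @hom B Z X) (I : hom W Z) (J : hom Y X) (P : hom W Y) (IQ PJ : hom W X)
  (jl jr : hom X Y) (il ir : hom Z W)
  (hA : cell (id1 Z) (comp1 I il)) (hAi : cell (comp1 I il) (id1 Z))
  (eAj : cell (comp1 jl J) (id1 Y)) (hBj : cell (id1 Y) (comp1 jr J))
  (eBi : cell (comp1 I ir) (id1 Z))
  (cqi : cell (comp1 Q I) IQ) (cqi' : cell IQ (comp1 Q I))
  (a : cell IQ PJ) (a' : cell PJ IQ) (cjp' : cell PJ (comp1 J P)) (cjp : cell (comp1 J P) PJ)
  (r : cell jl jr) (ri : cell il ir)
  (HK1 : vcomp hBj eAj = rw r J) (HK2 : vcomp eBi (lw I ri) = hAi)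
  (H1 : vcomp hAi hA = id2 _) (H2 : vcomp cqi' cqi = id2 _) (H3 : vcomp a' a = id2 _)
  (H4 : vcomp cjp cjp' = id2 _) :
  runit_inv (comp1 jl Q) >>> hcomp (id2 (comp1 jl Q)) hA >>> assoc_inv jl Q (comp1 I il)
  >>> hcomp (id2 jl) (assoc Q I il) >>> hcomp (id2 jl) (hcomp cqi (id2 il))
  >>> hcomp (id2 jl) (hcomp a (id2 il)) >>> hcomp (id2 jl) (hcomp cjp' (id2 il))
  >>> hcomp (id2 jl) (assoc_inv J P il) >>> assoc jl J (comp1 P il)
  >>> hcomp eAj (id2 (comp1 P il)) >>> lunit (comp1 P il)
  >>> hcomp (id2 P) ri
  >>> (lunit_inv (comp1 P ir) >>> hcomp hBj (id2 (comp1 P ir)) >>> assoc_inv jr J (comp1 P ir)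
  >>> hcomp (id2 jr) (assoc J P ir) >>> hcomp (id2 jr) (hcomp cjp (id2 ir))
  >>> hcomp (id2 jr) (hcomp a' (id2 ir)) >>> hcomp (id2 jr) (hcomp cqi' (id2 ir))
  >>> hcomp (id2 jr) (assoc_inv Q I ir) >>> hcomp (id2 jr) (hcomp (id2 Q) eBi)
  >>> hcomp (id2 jr) (runit Q))
  = hcomp r (id2 Q).
Proof.
  norm.
  rewrite (Lui (lw P ri)). norm. collapse HB.
  swapL hBj (lw P ri).
  rewrite (LLi jr J (lw P ri)). norm. collapse HB.
  rewrite (LL J P ri), !lw_comp. norm. collapse HB.
  swapwL jr cjp ri. swapwL jr a' ri. swapwL jr cqi' ri.
  rewrite (LLi Q I ri), !lw_comp. norm. collapse HB.
  rewrite (ww_comb jr Q (lw I ri) eBi), HK2.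
  rewrite (rr_comb (comp1 P il) eAj hBj), HK1, (RR J (comp1 P il) r). norm. collapse HB.
  r4 HB r (assoc J P il) (assoc_inv J P il). norm. collapse HB.
  swapL r (rw cjp' il). swapL r (rw a il). swapL r (rw cqi il).
  rewrite (cancel_lr jr il cjp' cjp _ H4), (cancel_lr jr il a a' _ H3), (cancel_lr jr il cqi cqi' _ H2).
  r4 HB r (assoc_inv Q I il) (assoc Q I il). norm. collapse HB.
  swapR r (lw Q hAi).
  rewrite (LLi jl Q hA). norm. collapse HB.
  rewrite (cancel_ll jl Q hA hAi _ H1).
  r4 HB r (runit Q) (runit_inv Q). norm. collapse HB.
  finish HB.
Qed.

Theorem mainTheorem15 (C D : Bicat) (HC : IsStrict C) (HD : IsStrict D)
  (S : Setting C D)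
  (X Y Z W : ob C) (j : hom X Y) (q : hom X Z) (i : hom Z W) (p : hom Y W)
  (al : cell (comp1 p j) (comp1 i q))
  (iA : smor (SA S) i) (iB : smor (SB S) i) (jA : smor (SA S) j) (jB : smor (SB S) j)
  (HepsBi : IsIso (epsB S iB)) (HepsBj : IsIso (epsB S jB))
  (al_inv : cell (comp1 i q) (comp1 p j)) (Hal : IsInverse al al_inv)
  (etaAi_inv : cell (comp1 (star (st S) i) (fmap (shr S) iA)) (id1 (F0 (st S) Z)))
  (HetaAi : IsInverse (etaA S iA) etaAi_inv)
  (etaAj_inv : cell (comp1 (star (st S) j) (fmap (shr S) jA)) (id1 (F0 (st S) X)))
  (HetaAj : IsInverse (etaA S jA) etaAj_inv) :
  A_D S j q i p al iA jA
  >>> hcomp (id2 (star (st S) p)) (rho S i iA iB etaAi_inv)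
  >>> B_D S q j p i al_inv iB jB
  = hcomp (rho S j jA jB etaAj_inv) (id2 (star (st S) q)).
Proof.
  pose proof (slaws S) as L.
  pose proof (cplaws (st S)) as LS.
  assert (HK1 := K1 HD (star (st S) j) (fmap (shr S) jA) (fmap (psh S) jB)
                   (etaA S jA) etaAj_inv (epsA S jA) (etaB S jB) HetaAj
                   (proj2 (adjA L _ _ _ jA))).
  assert (HK2 := K2 HD (star (st S) i) (fmap (shr S) iA) (fmap (psh S) iB)
                   (etaA S iA) etaAi_inv (etaB S iB) (epsB S iB)
                   (proj1 (adjB L _ _ _ iB))).
  assert (H3 : vcomp (star2 (st S) al_inv) (star2 (st S) al) = id2 _).
  { rewrite <- (star2_comp LS), (proj2 Hal). apply (star2_id LS). }
  exact (gen_main HD (star (st S) q) (star (st S) i) (star (st S) j) (star (st S) p)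
          (star (st S) (comp1 i q)) (star (st S) (comp1 p j))
          (fmap (shr S) jA) (fmap (psh S) jB) (fmap (shr S) iA) (fmap (psh S) iB)
          (etaA S iA) etaAi_inv (epsA S jA) (etaB S jB) (epsB S iB)
          (scmp (st S) q i) (scmp_inv (st S) q i) (star2 (st S) al) (star2 (st S) al_inv)
          (scmp_inv (st S) j p) (scmp (st S) j p)
          (rho S j jA jB etaAj_inv) (rho S i iA iB etaAi_inv)
          HK1 HK2 (proj1 HetaAi) (proj1 (scmp_iso LS _ _ _ q i)) H3 (proj2 (scmp_iso LS _ _ _ j p))).
Qed.
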